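(* Let $n\ge 2$ and $r\ge 1$, and let $d\ge 1$ be the integer with $\binom{n+d-2}{d-1}<r\le\binom{n+d-1}{d}$. Let $L_r^n\subset\mathbb{A}^n$ be the union of $r$ lines through the origin whose corresponding points in $\mathbb{P}^{n-1}$ are in uniform position. Then \[\delta(L_r^n)=dr-\binom{n+d-1}{d-1}.\]
   Context: The ground field $\k$ is algebraically closed of characteristic $0$. For a reduced curve singularity $(C,0)$ with local ring $\mathcal{O}$ and normalisation $\overline{\mathcal{O}}$, $\delta=\dim_\k\overline{\mathcal{O}}/\mathcal{O}$. A set $\Gamma$ of $r$ points in $\mathbb{P}^{n-1}$ is in general position if for every $\ell\ge1$ it imposes $\min(r,\binom{n+\ell-1}{\ell})$ independent conditions on forms of degree $\ell$; it is in uniform position if every subset of $\Gamma$ is in general position. A union of lines through the origin in $\mathbb{A}^n$ is called in general/uniform position if the corresponding point set in $\mathbb{P}^{n-1}$ is. $L_r^n$ denotes the cone over such an $r$-point set, i.e. the union of the $r$ corresponding lines through $0\in\mathbb{A}^n$. *)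

(* Defs.v *)
From HB Require Import structures.
From mathcomp Require Import all_boot all_order all_algebra.
From mathcomp Require Import mpoly.
Set Implicit Arguments. Unset Strict Implicit. Unset Printing Implicit Defensive.
Import GRing.Theory.
Local Open Scope ring_scope.

(* A form of degree l in n variables: every monomial of p has total degree l
   (the zero polynomial counts as a form of every degree). *)
Definition is_form (K : fieldType) (n l : nat) (p : {mpoly K[n]}) : bool :=
  all (fun m : 'X_{1..n} => mdeg m == l) (msupp p).

Definition eval_on (K : fieldType) (n r : nat) (pts : 'I_r -> 'I_n -> K)
    (S : {set 'I_r}) (f : {mpoly K[n]}) : 'rV[K]_r :=
  \row_i (if i \in S then f.@[pts i] else 0).

(* The points pts_i (i in S) impose exactly c independent conditions on forms of
   degree l: the image of the evaluation map (forms of degree l) -> K^S has dimension c. *)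
Definition imposes_conditions (K : fieldType) (n r : nat) (pts : 'I_r -> 'I_n -> K)
    (S : {set 'I_r}) (l c : nat) : Prop :=
  exists fs : 'I_c -> {mpoly K[n]},
    (forall j, is_form l (fs j)) /\
    row_free (\matrix_j eval_on pts S (fs j)) /\
    (forall f, is_form l f -> (eval_on pts S f <= \matrix_j eval_on pts S (fs j))%MS).

Definition distinct_proj_points (K : fieldType) (n r : nat) (pts : 'I_r -> 'I_n -> K) : Prop :=
  (forall i, exists k, pts i k != 0) /\
  (forall i j, i != j -> ~ exists lam : K, forall k, pts j k = lam * pts i k).

Definition general_position_sub (K : fieldType) (n r : nat) (pts : 'I_r -> 'I_n -> K)
    (S : {set 'I_r}) : Prop :=
  forall l : nat, (1 <= l)%N ->
    imposes_conditions pts S l (minn #|S| 'C(n + l - 1, l)).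

Definition uniform_position (K : fieldType) (n r : nat) (pts : 'I_r -> 'I_n -> K) : Prop :=
  forall S : {set 'I_r}, general_position_sub pts S.

(* The normalisation map of the cone L over the points: the coordinate ring
   K[x_1..x_n]/I(L) maps into its normalisation prod_{i<r} K[t], a polynomial f
   going to (f(t * pts_i))_i. *)
Definition norm_map (K : fieldType) (n r : nat) (pts : 'I_r -> 'I_n -> K)
    (f : {mpoly K[n]}) (i : 'I_r) : {poly K} :=
  mmap (fun c : K => c%:P) (fun k : 'I_n => pts i k *: 'X) f.

(* delta(L) = m : the cokernel of the normalisation map has K-dimension m, i.e.
   there are m vectors forming a basis of prod_i K[t] modulo the image. *)
Definition delta_eq (K : fieldType) (n r : nat) (pts : 'I_r -> 'I_n -> K) (m : nat) : Prop :=
  exists v : 'I_m -> 'I_r -> {poly K},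
    (forall w : 'I_r -> {poly K}, exists (c : 'I_m -> K) (f : {mpoly K[n]}),
        forall i, w i = norm_map pts f i + \sum_(j < m) c j *: v j i) /\
    (forall (c : 'I_m -> K) (f : {mpoly K[n]}),
        (forall i, \sum_(j < m) c j *: v j i = norm_map pts f i) -> forall j, c j = 0).

(* Main.v *)
Require Import Defs.
From HB Require Import structures.
From mathcomp Require Import all_boot all_order all_algebra.
From mathcomp Require Import mpoly.
From Stdlib Require Import IndefiniteDescription.
From mathcomp Require Import zify.
Set Implicit Arguments. Unset Strict Implicit. Unset Printing Implicit Defensive.
Import GRing.Theory.
Local Open Scope ring_scope.
Section PolyPart.
Variables (K : fieldType) (n r : nat) (pts : 'I_r -> 'I_n -> K).

Lemma norm_mapE f i : norm_map pts f i = mmap polyC (fun k => pts i k *: 'X) f.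
Proof. by []. Qed.

Lemma norm_mapD f g i : norm_map pts (f + g) i = norm_map pts f i + norm_map pts g i.
Proof. by rewrite !norm_mapE mmapD. Qed.

Lemma norm_mapZ c f i : norm_map pts (c *: f) i = c *: norm_map pts f i.
Proof. by rewrite !norm_mapE mmapZ mul_polyC. Qed.

Lemma norm_map0 i : norm_map pts 0 i = 0.
Proof. by rewrite norm_mapE mmap0. Qed.

Lemma norm_map_sum (I : Type) (s : seq I) (P : pred I) (F : I -> {mpoly K[n]}) i :
  norm_map pts (\sum_(j <- s | P j) F j) i = \sum_(j <- s | P j) norm_map pts (F j) i.
Proof.
elim/big_rec2: _ => [|j y1 y2 _ <-]; first exact: norm_map0.
exact: norm_mapD.
Qed.

Lemma norm_map_homog l f i : f \is l.-homog ->
  norm_map pts f i = f.@[pts i] *: 'X^l.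
Proof.
move=> /dhomogP hf; rewrite /norm_map /mmap mevalE scaler_suml big_seq [RHS]big_seq.
apply: eq_bigr => m /hf <-; rewrite /mmap1.
rewrite (eq_bigr (fun j => pts i j ^+ m j *: (polyX K) ^+ m j)); last by move=> j _; rewrite (exprZn (A := {poly K})).
rewrite scaler_prod mul_polyC scalerA; congr (_ *: _).
by rewrite prodrXr; congr (_ ^+ _); exact: (esym (mdegE m)).
Qed.

Lemma coef_norm_map f i k :
  (norm_map pts f i)`_k = (pihomog mdeg k f).@[pts i].
Proof.
pose N := maxn (msize f) k.+1.
have hN : (mmeasure mdeg f <= N)%N by rewrite leq_maxl.
have kN : (k < N)%N by rewrite leq_maxr.
rewrite {1}(pihomog_partitionE hN) norm_map_sum coef_sum.
rewrite (bigD1 (Ordinal kN)) //= big1 ?addr0.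
  by rewrite (norm_map_homog _ (pihomogP _ _ _)) coefZ coefXn eqxx mulr1.
move=> j /eqP hj; rewrite (norm_map_homog _ (pihomogP _ _ _)) coefZ coefXn.
case: eqP => [ekj|]; last by rewrite mulr0.
by case: hj; apply: val_inj; rewrite /= ekj.
Qed.
End PolyPart.
Lemma is_formE (K : fieldType) n l (p : {mpoly K[n]}) : is_form l p = (p \is l.-homog).
Proof. by rewrite dhomogE. Qed.

Section Main.
Variables (K : fieldType) (n r d : nat) (pts : 'I_r -> 'I_n -> K) (cc : nat -> nat).
Hypothesis HF : forall l, imposes_conditions pts setT l (cc l).

Definition ev (f : {mpoly K[n]}) : 'rV[K]_r := \row_i f.@[pts i].

Lemma eval_onT f : eval_on pts setT f = ev f.
Proof. by apply/rowP => i; rewrite !mxE in_setT. Qed.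

Lemma evD f g : ev (f + g) = ev f + ev g.
Proof. by apply/rowP => i; rewrite !mxE mevalD. Qed.

Lemma evZ c f : ev (c *: f) = c *: ev f.
Proof. by apply/rowP => i; rewrite !mxE mevalZ. Qed.

Lemma ev0 : ev 0 = 0.
Proof. by apply/rowP => i; rewrite !mxE meval0. Qed.

Lemma ev_sum (I : Type) (s : seq I) (P : pred I) (F : I -> {mpoly K[n]}) :
  ev (\sum_(j <- s | P j) F j) = \sum_(j <- s | P j) ev (F j).
Proof.
elim/big_rec2: _ => [|j y1 y2 _ <-]; first exact: ev0.
exact: evD.
Qed.

Definition Fs l : 'I_(cc l) -> {mpoly K[n]} :=
  proj1_sig (constructive_indefinite_description _ (HF l)).

Arguments Fs : clear implicits.
Definition E (l : nat) : 'M[K]_(cc l, r) := \matrix_(j < cc l) ev (Fs l j).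

Lemma E_spec l : [/\ forall j, Fs l j \is l.-homog, row_free (E l) &
  forall f, f \is l.-homog -> (ev f <= E l)%MS].
Proof.
rewrite /E /Fs; case: (constructive_indefinite_description _ _) => fs /= [h1 [h2 h3]].
have eqM : \matrix_j eval_on pts setT (fs j) = \matrix_j ev (fs j).
  by apply/matrixP => a b; rewrite !mxE in_setT.
split.
- by move=> j; rewrite -is_formE.
- by rewrite -eqM.
- by move=> f hf; rewrite -eqM -eval_onT; apply: h3; rewrite is_formE.
Qed.

Lemma realize l x : (x <= E l)%MS -> exists2 g, g \is l.-homog & ev g = x.
Proof.
have [hF _ _] := E_spec l.
move=> hx; pose a := x *m pinvmx (E l).
exists (\sum_j a 0 j *: Fs l j).
  apply: (big_ind (fun p => p \is l.-homog)); first exact: dhomog0.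
    by move=> p q hp hq; apply: dhomogD.
  by move=> j _; apply: dhomogZ.
rewrite ev_sum -[RHS](mulmxKpV hx) -/a mulmx_sum_row.
by apply: eq_bigr => j _; rewrite evZ rowK.
Qed.


Definition rowl (l : 'I_d) (e : 'rV[K]_r) : 'M[K]_(d, r) :=
  \matrix_(a, b) (if a == l then e 0 b else 0).

Lemma rowlE l e a b : rowl l e a b = if a == l then e 0 b else 0.
Proof. by rewrite mxE. Qed.

Lemma rowl_sumZ l (I : finType) (c : I -> K) (F : I -> 'rV[K]_r) :
  \sum_j c j *: rowl l (F j) = rowl l (\sum_j c j *: F j).
Proof.
apply/matrixP => a b; rewrite summxE mxE summxE.
under eq_bigr do rewrite !mxE.
case: eqP => _; last by rewrite big1 // => j _; rewrite mulr0.
by apply: eq_bigr => j _; rewrite !mxE.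
Qed.

Lemma row_rowl l l' e : row l (rowl l' e) = if l == l' then e else 0.
Proof.
apply/rowP => b; rewrite !mxE; case: eqP => _ //; by rewrite mxE.
Qed.

Definition Xl (l : 'I_d) := [tuple rowl l (row j (E l)) | j < cc l].
Definition Ul l := <<Xl l>>%VS.
Definition U := (\sum_(l < d) Ul l)%VS.

Lemma nth_Xl (l : 'I_d) (j : 'I_(cc l)) : (Xl l)`_j = rowl l (row j (E l)).
Proof. by rewrite -tnth_nth tnth_mktuple. Qed.

Lemma U1 (l : 'I_d) e : (e <= E l)%MS -> rowl l e \in Ul l.
Proof.
move=> he; rewrite -(mulmxKpV he) mulmx_sum_row -rowl_sumZ.
apply: memv_suml => j _; apply: memvZ; rewrite -nth_Xl.
by apply: memv_span; apply: mem_nth; rewrite size_tuple.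
Qed.

Lemma U2 (l : 'I_d) u : u \in Ul l -> exists2 e, (e <= E l)%MS & u = rowl l e.
Proof.
move=> /coord_span ->; exists (\sum_j coord (Xl l) j u *: row j (E l)).
  by apply: summx_sub => j _; apply: scalemx_sub; apply: row_sub.
by rewrite -rowl_sumZ; apply: eq_bigr => j _; rewrite nth_Xl.
Qed.

Lemma dimUl (l : 'I_d) : \dim (Ul l) = cc l.
Proof.
have [_ hfree _] := E_spec (nat_of_ord l).
suff /eqnP -> : free (Xl l) by rewrite size_tuple.
apply/freeP => k hk i.
have : \sum_i k i *: row i (E l) = 0.
  move/matrixP: hk; under eq_bigr do rewrite nth_Xl; rewrite rowl_sumZ => hk.
  by apply/rowP => b; move: (hk l b); rewrite !mxE eqxx.
move=> hs; have : (\row_j k j) *m E l = 0 *m E l.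
  by rewrite mul0mx mulmx_sum_row -[RHS]hs; apply: eq_bigr => j _; rewrite mxE.
by move/(row_free_inj hfree)/rowP/(_ i); rewrite !mxE.
Qed.

Lemma directU : directv U.
Proof.
apply/directv_sum_independent => us hus hsum l _.
have [e he Deq] := U2 (hus l isT).
have : row l (\sum_(l' < d) us l') = e.
  rewrite (raddf_sum (row l)) (bigD1 l) //= big1 ?addr0.
    by rewrite Deq row_rowl eqxx.
  move=> l' hl'; have [e' _ ->] := U2 (hus l' isT).
  by rewrite row_rowl eq_sym (negbTE hl').
rewrite hsum row0 => e0; rewrite Deq -e0.
by apply/matrixP => a b; rewrite !mxE; case: eqP.
Qed.

Lemma dimU : \dim U = \sum_(l < d) cc l.
Proof.
move/directvP: directU => ->; rewrite /=.
by apply: eq_bigr => l _; rewrite dimUl.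
Qed.

Lemma U6 u (l : 'I_d) : u \in U -> (row l u <= E l)%MS.
Proof.
move=> /memv_sumP [us hus ->].
rewrite (raddf_sum (row l)) (bigD1 l) //= big1 ?addr0.
  by have [e he ->] := U2 (hus l isT); rewrite row_rowl eqxx.
move=> l' hl'; have [e' _ ->] := U2 (hus l' isT).
by rewrite row_rowl eq_sym (negbTE hl').
Qed.

Definition Uc := (U^C)%VS.
Definition vb := vbasis Uc.
Definition polyOf (x : 'M[K]_(d, r)) i : {poly K} := \sum_(l < d) x l i *: 'X^l.

Lemma polyOf_lin (I : finType) (c : I -> K) (X : I -> 'M[K]_(d, r)) i :
  \sum_j c j *: polyOf (X j) i = polyOf (\sum_j c j *: X j) i.
Proof.
rewrite /polyOf; under eq_bigr do rewrite scaler_sumr.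
rewrite exchange_big; apply: eq_bigr => l _.
rewrite summxE scaler_suml; apply: eq_bigr => j _.
by rewrite mxE scalerA.
Qed.

Lemma coef_polyOf x i k :
  (polyOf x i)`_k = \sum_(l < d) x l i * (k == l)%:R.
Proof. by rewrite /polyOf coef_sum; apply: eq_bigr => l _; rewrite coefZ coefXn. Qed.

Lemma coef_polyOf_lt x i (l : 'I_d) : (polyOf x i)`_l = x l i.
Proof.
rewrite coef_polyOf (bigD1 l) //= eqxx mulr1 big1 ?addr0 // => l' hl'.
case: eqP => [/val_inj e|]; last by rewrite mulr0.
by rewrite e eqxx in hl'.
Qed.

Lemma coef_polyOf_ge x i k : (d <= k)%N -> (polyOf x i)`_k = 0.
Proof.
move=> hk; rewrite coef_polyOf big1 // => l _.
have -> : (k == l :> nat) = false.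
  by apply/negbTE; rewrite neq_ltn (leq_trans (ltn_ord l) hk) orbT.
by rewrite mulr0.
Qed.

Definition vv (j : 'I_(\dim Uc)) (i : 'I_r) : {poly K} := polyOf vb`_j i.

Hypothesis Hhigh : forall l, (d <= l)%N -> cc l = r.

Theorem delta_main : delta_eq pts (\dim Uc).
Proof.
exists vv; split.
  move=> w.
  pose N := maxn d (\max_i size (w i)).
  pose Mw : 'M[K]_(d, r) := \matrix_(l, i) (w i)`_l.
  have : Mw \in (U + Uc)%VS by rewrite addv_complf memvf.
  case/memv_addP => u uU [x xUc Mwux].
  pose t (l : nat) : 'rV[K]_r := \row_i ((w i)`_l - (polyOf x i)`_l).
  have ht : forall l : 'I_N, exists g, g \is (nat_of_ord l).-homog /\ ev g = t l.
    move=> l; suff : (t l <= E l)%MS by case/realize => g ? ?; exists g.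
    case: (ltnP l d) => [ld|dl].
      have -> : t l = row (Ordinal ld) u.
        apply/rowP => i; rewrite !mxE.
        have e1 := coef_polyOf_lt x i (Ordinal ld); simpl in e1; rewrite e1.
        move/matrixP: Mwux => /(_ (Ordinal ld) i); rewrite !mxE /= => ->.
        by rewrite addrK.
      exact: (U6 (Ordinal ld) uU).
    have [_ hfree _] := E_spec l.
    apply: submx_full; rewrite /row_full.
    by move: hfree; rewrite /row_free => /eqP ->; rewrite Hhigh.
  have [phi hphi] := fin_all_exists ht.
  exists (fun j => coord vb j x), (\sum_(l < N) phi l) => i.
  rewrite polyOf_lin -(coord_vbasis xUc) norm_map_sum.
  apply/polyP => k; rewrite coefD coef_sum.
  under eq_bigr => l _ do rewrite (norm_map_homog _ _ (proj1 (hphi l))) coefZ coefXn.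
  case: (ltnP k N) => [kN|Nk].
    rewrite (bigD1 (Ordinal kN)) //= eqxx mulr1 big1 ?addr0.
      have := proj2 (hphi (Ordinal kN)); move/rowP /(_ i); rewrite !mxE /= => ->.
      by rewrite subrK.
    move=> l hl; case: eqP => [e|]; last by rewrite mulr0.
    by case/eqP: hl; apply: val_inj.
  rewrite big1; last first.
    move=> l _; case: eqP => [e|]; last by rewrite mulr0.
    by move: (ltn_ord l); rewrite -e ltnNge Nk.
  rewrite add0r coef_polyOf_ge; last by apply: leq_trans Nk; rewrite leq_maxl.
  apply: nth_default; apply: leq_trans Nk; apply: leq_trans (leq_maxr _ _).
  exact: (leq_bigmax i).
move=> c f hcf j.
pose x := \sum_j c j *: vb`_j.
have xUc : x \in Uc.
  apply: memv_suml => k _; apply: memvZ; apply: vbasis_mem.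
  by apply: mem_nth; rewrite size_tuple.
have xU : x \in U.
  have -> : x = \sum_(l < d) rowl l (ev (pihomog mdeg l f)).
    apply/matrixP => a b; rewrite -coef_polyOf_lt -polyOf_lin.
    rewrite (_ : \sum_j0 c j0 *: polyOf vb`_j0 b = norm_map pts f b); last exact: hcf.
    rewrite coef_norm_map summxE (bigD1 a) //= rowlE eqxx mxE big1 ?addr0 //.
    by move=> l hl; rewrite rowlE eq_sym (negbTE hl).
  apply: memv_sumr => l _; apply: U1.
  by have [_ _ ->] := E_spec l; last exact: pihomogP.
have : x \in (U :&: Uc)%VS by rewrite memv_cap xU xUc.
rewrite capv_compl memv0 => /eqP x0.
by move/freeP: (basis_free (vbasisP Uc)) => /(_ c x0).
Qed.
End Main.
Lemma binom_mono n' a b : (a <= b)%N -> ('C(n' + a, a) <= 'C(n' + b, b))%N.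
Proof.
elim: b => [|b IH]; first by rewrite leqn0 => /eqP ->.
rewrite leq_eqVlt => /orP [/eqP -> //|hab].
apply: leq_trans (IH hab) _.
by rewrite addnS binS leq_addl.
Qed.

Lemma hockey n' d : (\sum_(l < d.+1) 'C(n' + l, l) = 'C(n' + d.+1, d))%N.
Proof.
elim: d => [|d IH]; first by rewrite big_ord1 /= !bin0.
by rewrite big_ord_recr /= IH (addnS n' d.+1) binS addnC.
Qed.

Lemma imposes0 (K : fieldType) n r (pts : 'I_r -> 'I_n -> K) :
  (0 < r)%N -> imposes_conditions pts setT 0 1.
Proof.
move=> hr; exists (fun _ => 1); split; [|split].
- by move=> j; rewrite is_formE dhomog1.
- have hv : (\matrix_(j < 1) eval_on pts setT (1 : {mpoly K[n]})) != 0.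
    apply/eqP => /matrixP /(_ 0 (Ordinal hr)).
    by rewrite !mxE in_setT meval1 => /eqP; rewrite oner_eq0.
  by rewrite /row_free rank_rV hv.
- move=> f; rewrite is_formE => /dhomogP hf.
  pose s := \sum_(m <- msupp f) f@_m.
  have hev : forall x, f.@[x] = s.
    move=> x; rewrite mevalE /s big_seq [RHS]big_seq; apply: eq_bigr => m hm.
    have : mdeg m == 0%N by rewrite hf.
    rewrite mdeg_eq0 => /eqP ->.
    by rewrite big1 ?mulr1 // => i _; rewrite mnm0E expr0.
  have -> : eval_on pts setT f = s *: \matrix_(j < 1) eval_on pts setT 1.
    by apply/matrixP => a b; rewrite !mxE !in_setT hev meval1 mulr1.
  exact/scalemx_sub/submx_refl.
Qed.
Unset Implicit Arguments.
Theorem mainTheorem1 (K : closedFieldType) (charK0 : [pchar K] =i pred0)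
    (n r d : nat) (hn : (2 <= n)%N) (hr : (1 <= r)%N) (hd : (1 <= d)%N)
    (hlow : ('C(n + d - 2, d - 1) < r)%N) (hup : (r <= 'C(n + d - 1, d))%N)
    (pts : 'I_r -> 'I_n -> K)
    (hdist : distinct_proj_points pts) (hunif : uniform_position pts) :
  exists m : nat, delta_eq pts m /\
    (m%:Z = (d * r)%:Z - ('C(n + d - 1, d - 1))%:Z)%R.
Proof.
have cardT : #|[set: 'I_r]| = r by rewrite cardsT card_ord.
pose cc l := minn #|[set: 'I_r]| 'C(n + l - 1, l).
have HF : forall l, imposes_conditions pts setT l (cc l).
  case=> [|l].
    rewrite /cc cardT bin0 (_ : minn r 1 = 1%N); first exact: imposes0.
    by apply/minn_idPr.
  exact: (hunif setT l.+1 isT).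
have hnl : forall l, (n + l - 1 = n.-1 + l)%N by move=> l; lia.
have Hhigh : forall l, (d <= l)%N -> cc l = r.
  move=> l hl; rewrite /cc cardT; apply/minn_idPl.
  apply: leq_trans hup _; rewrite !hnl; exact: (binom_mono n.-1 hl).
have Hlow : forall l, (l < d)%N -> cc l = 'C(n.-1 + l, l).
  move=> l hl; rewrite /cc cardT hnl; apply/minn_idPr/ltnW.
  apply: leq_ltn_trans hlow; rewrite (_ : (n + d - 2 = n.-1 + d.-1)%N); last by lia.
  rewrite (_ : (d - 1 = d.-1)%N); last by lia.
  by apply: binom_mono; lia.
eexists; split; first exact: (delta_main HF Hhigh).
rewrite /Uc dimv_compl dimvf dim_matrix dimU.
have hle : (\sum_(l < d) cc l <= d * r)%N.
  rewrite (_ : (d * r = \sum_(l < d) r)%N); last by rewrite sum_nat_const card_ord.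
  by apply: leq_sum => l _; rewrite /cc cardT geq_minl.
have hs : (\sum_(l < d) cc l = 'C(n + d - 1, d - 1))%N.
  rewrite (eq_bigr (fun l : 'I_d => 'C(n.-1 + l, l))) => [|l _]; last exact: Hlow.
  have e1 : (n + d - 1 = n.-1 + d.-1.+1)%N by lia.
  have e2 : (d - 1 = d.-1)%N by lia.
  by rewrite e1 e2 -hockey (prednK hd).
rewrite -subzn; last exact: hle.
by rewrite hs.
Qed.
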